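(* Let $G$ be a simplicial group and $M$ an abelian $\pi_0(G)$-module. The map $C^1(\pi_0(G),M)\to C^1(G,M)$, $c\mapsto (g_0\mapsto c(g_0B_0NG))$, restricts to an isomorphism $Z^1(\pi_0(G),M)\to Z^1(G,M)$, which in turn restricts to an isomorphism $B^1(\pi_0(G),M)\to B^1(G,M)$. In particular $H^1(G,M)\cong H^1(\pi_0(G),M)$.
   Context: Simplicial group $G$ (faces $d_k$), $N_1G=\ker d_1\subseteq G_1$, $B_0NG=d_0(N_1G)$, $\pi_0(G)=G_0/B_0NG$. Cochain complex of $G$: $C^n(G,M)=\mathrm{Map}(G_{n-1}\times\cdots\times G_0,M)$; in low degrees $C^0=M$, $C^1=\mathrm{Map}(G_0,M)$, $C^2=\mathrm{Map}(G_1\times G_0,M)$, $(dc)(g_0)=c-\langle g_0\rangle\cdot c$ for $c\in C^0$, and $(dc)(g_1,g_0)=c(d_0g_1)-c((d_1g_1)g_0)+\langle g_1\rangle\cdot c(g_0)$ for $c\in C^1$, where $\langle g\rangle$ is the class in $\pi_0(G)$ of $g$ (resp. of $d_1g$). For a group $\Pi$: $C^1(\Pi,M)=\mathrm{Map}(\Pi,M)$, $(dc)(h,g)=c(h)-c(hg)+h\cdot c(g)$, $(dc)(g)=c-g\cdot c$ on $C^0=M$; $Z^1,B^1,H^1$ as usual. *)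

(* Defs.v *)
(* M is a zmodType; groups (possibly infinite) are given by an
   explicit record, since MathComp only has finite groups. *)
From HB Require Import structures.
From mathcomp Require Import all_boot all_order all_algebra.
Set Implicit Arguments. Unset Strict Implicit. Unset Printing Implicit Defensive.
Import GRing.Theory.
Local Open Scope ring_scope.

Record grp := Grp {
  gcar :> Type;
  gmul : gcar -> gcar -> gcar;
  gone : gcar;
  ginv : gcar -> gcar;
  gmulA : forall x y z, gmul x (gmul y z) = gmul (gmul x y) z;
  gmul1 : forall x, gmul gone x = x;
  gmulV : forall x, gmul (ginv x) x = gone }.

Arguments gmul {g}.
Arguments gone {g}.
Arguments ginv {g}.

Definition is_hom (A B : grp) (f : A -> B) : Prop :=
  forall x y, f (gmul x y) = gmul (f x) (f y).

Record sgrp := SGrp {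
  sG : nat -> grp;
  face : forall n, nat -> sG n.+1 -> sG n;
  degen : forall n, nat -> sG n -> sG n.+1;
  face_hom : forall n i, (i <= n.+1)%N -> is_hom (@face n i);
  degen_hom : forall n j, (j <= n)%N -> is_hom (@degen n j);
  dd : forall n i j (x : sG n.+2), (i < j)%N -> (j <= n.+2)%N ->
         face i (face j x) = face j.-1 (face i x);
  ds_lt : forall n i j (x : sG n.+1), (i < j)%N -> (j <= n.+1)%N ->
         face i (degen j x) = degen j.-1 (face i x);
  ds_eq : forall n j (x : sG n), (j <= n)%N -> face j (degen j x) = x;
  ds_eq1 : forall n j (x : sG n), (j <= n)%N -> face j.+1 (degen j x) = x;
  ds_gt : forall n i j (x : sG n.+1), (j.+1 < i)%N -> (i <= n.+2)%N ->
         face i (degen j x) = degen j (face i.-1 x);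
  ss : forall n i j (x : sG n), (i <= j)%N -> (j <= n)%N ->
         degen i (degen j x) = degen j.+1 (degen i x) }.

Definition B0NG (G : sgrp) (g : sG G 0) : Prop :=
  exists n : sG G 1, face 1 n = gone /\ face 0 n = g.

(* (P, p) is pi_0(G) = G_0 / B_0NG: p is a surjective homomorphism whose
   kernel is exactly B_0NG (a quotient of G_0 by B_0NG, up to unique iso). *)
Definition is_pi0 (G : sgrp) (P : grp) (p : sG G 0 -> P) : Prop :=
  [/\ is_hom p, (forall x : P, exists g, p g = x)
    & (forall g, p g = gone <-> B0NG g)].

Definition is_module (P : grp) (M : zmodType) (act : P -> M -> M) : Prop :=
  [/\ (forall m, act gone m = m),
      (forall x y m, act (gmul x y) m = act x (act y m))
    & (forall x m1 m2, act x (m1 + m2) = act x m1 + act x m2)].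

Definition grp_d1 (P : grp) (M : zmodType) (act : P -> M -> M) (c : P -> M)
  (h g : P) : M := c h - c (gmul h g) + act h (c g).
Definition grp_Z1 (P : grp) (M : zmodType) (act : P -> M -> M) (c : P -> M) : Prop :=
  forall h g, grp_d1 act c h g = 0.
Definition grp_B1 (P : grp) (M : zmodType) (act : P -> M -> M) (c : P -> M) : Prop :=
  exists m : M, forall g, c g = m - act g m.

(* Cochains of the simplicial group G, with <g> = p g for g in G_0 and
   <g1> = p (d_1 g1) for g1 in G_1. *)
Definition sgrp_d1 (G : sgrp) (P : grp) (p : sG G 0 -> P) (M : zmodType)
  (act : P -> M -> M) (c : sG G 0 -> M) (g1 : sG G 1) (g0 : sG G 0) : M :=
  c (face 0 g1) - c (gmul (face 1 g1) g0) + act (p (face 1 g1)) (c g0).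
Definition sgrp_Z1 (G : sgrp) (P : grp) (p : sG G 0 -> P) (M : zmodType)
  (act : P -> M -> M) (c : sG G 0 -> M) : Prop :=
  forall g1 g0, sgrp_d1 p act c g1 g0 = 0.
Definition sgrp_B1 (G : sgrp) (P : grp) (p : sG G 0 -> P) (M : zmodType)
  (act : P -> M -> M) (c : sG G 0 -> M) : Prop :=
  exists m : M, forall g0, c g0 = m - act (p g0) m.

Definition infl (G : sgrp) (P : grp) (p : sG G 0 -> P) (M : zmodType)
  (c : P -> M) : sG G 0 -> M := fun g0 => c (p g0).

(* Main.v *)
Require Import Defs.
From HB Require Import structures.
From mathcomp Require Import all_boot all_algebra.
From Stdlib Require Import FunctionalExtensionality ClassicalEpsilon.
Import GRing.Theory.
Local Open Scope ring_scope.

Lemma gmulVr (A : grp) (x : A) : gmul x (ginv x) = gone.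
Proof.
rewrite -[gmul x _]gmul1 -{1}(gmulV (ginv x)) -gmulA (gmulA (ginv x) x) gmulV gmul1.
exact: gmulV.
Qed.

Lemma gmulr1 (A : grp) (x : A) : gmul x gone = x.
Proof. by rewrite -(gmulV x) gmulA gmulVr gmul1. Qed.

Lemma gcancel (A : grp) (x y z : A) : gmul x y = gmul x z -> y = z.
Proof.
move=> h; rewrite -(gmul1 y) -(gmul1 z) -(gmulV x) -!gmulA h //.
Qed.

Lemma hom1 (A B : grp) (f : A -> B) : is_hom f -> f gone = gone.
Proof.
move=> hf; apply: (@gcancel _ (f gone)); rewrite gmulr1 -hf gmul1 //.
Qed.

Lemma homV (A B : grp) (f : A -> B) : is_hom f -> forall x, f (ginv x) = ginv (f x).
Proof.
move=> hf x; apply: (@gcancel _ (f x)); rewrite gmulVr -hf gmulVr hom1 //.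
Qed.

Lemma face01 (G : sgrp) (P : grp) (p : sG G 0 -> P) :
  is_pi0 p -> forall g1 : sG G 1, p (face 0 g1) = p (face 1 g1).
Proof.
case=> hp _ hker g1.
have h0 : is_hom (@face G 0 0) by apply: face_hom.
have h1 : is_hom (@face G 0 1) by apply: face_hom.
set n := gmul g1 (ginv (degen 0 (face 1 g1))).
have : p (face 0 n) = gone.
  apply/hker; exists n; split => //.
  by rewrite /n h1 homV // ds_eq1 // gmulVr.
rewrite /n h0 homV // ds_eq // hp homV // => e.
have := f_equal (fun z => gmul z (p (face 1 g1))) e.
by rewrite /= -gmulA gmulV gmulr1 gmul1.
Qed.

Lemma act0 (P : grp) (M : zmodType) (act : P -> M -> M) :
  is_module act -> forall x, act x 0 = 0.
Proof.
case=> _ _ ha x; apply: (@addrI _ (act x 0)).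
by rewrite -ha !addr0.
Qed.

Theorem proposition3p5 (G : sgrp) (P : grp) (p : sG G 0 -> P)
  (M : zmodType) (act : P -> M -> M) :
  is_pi0 p -> is_module act ->
  (* the map is additive (a homomorphism of abelian groups) *)
  (forall c1 c2 : P -> M, infl p (fun x => c1 x + c2 x) =
      (fun g => infl p c1 g + infl p c2 g)) /\
  (* restriction to Z^1 is an isomorphism Z^1(pi_0 G, M) -> Z^1(G, M) *)
  (forall c, grp_Z1 act c -> sgrp_Z1 p act (infl p c)) /\
  (forall c c', grp_Z1 act c -> grp_Z1 act c' -> infl p c = infl p c' -> c = c') /\
  (forall c', sgrp_Z1 p act c' -> exists c, grp_Z1 act c /\ infl p c = c') /\
  (* restriction to B^1 is an isomorphism B^1(pi_0 G, M) -> B^1(G, M) *)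
  (forall c, grp_B1 act c -> sgrp_B1 p act (infl p c)) /\
  (forall c', sgrp_B1 p act c' -> exists c, grp_B1 act c /\ infl p c = c') /\
  (* hence H^1(G, M) ~ H^1(pi_0 G, M): a cocycle is a coboundary iff its image is *)
  (forall c, grp_Z1 act c -> (sgrp_B1 p act (infl p c) <-> grp_B1 act c)).
Proof.
move=> hpi hmod.
have hf := @face01 G P p hpi.
case: (hpi) => hp hsurj hker.
case: (hmod) => hact1 hactM hactD.
have B1B1 : forall c, grp_B1 act c -> sgrp_B1 p act (infl p c).
  by move=> c [m hm]; exists m => g0; rewrite /infl hm.
split; first by [].
split.
  move=> c hc g1 g0; rewrite /sgrp_d1 /infl hf hp; exact: hc.
split.
  move=> c c' _ _ e; apply: functional_extensionality => x.
  by have [g <-] := hsurj x; exact: (f_equal (fun f => f g) e).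
split.
  move=> c' hc'.
  have hmul : forall h g0, c' (gmul h g0) = c' h + act (p h) (c' g0).
    move=> h g0; have := hc' (degen 0 h) g0.
    rewrite /sgrp_d1 ds_eq // ds_eq1 // => /eqP.
    rewrite addrAC subr_eq0 => /eqP <- //.
  have hB : forall b, p b = gone -> c' b = 0.
    move=> b /hker [n [n1 n0]]; have := hc' n gone.
    by rewrite /sgrp_d1 n1 n0 gmul1 (@hom1 _ _ p hp) hact1 subrK.
  have hwd : forall g g', p g = p g' -> c' g = c' g'.
    move=> g g' e.
    have -> : g' = gmul g (gmul (ginv g) g') by rewrite gmulA gmulVr gmul1.
    have hb : p (gmul (ginv g) g') = gone by rewrite hp (@homV _ _ p hp) e gmulV.
    by rewrite hmul (hB _ hb) (@act0 _ _ act hmod) addr0.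
  pose pre := fun x => proj1_sig (constructive_indefinite_description _ (hsurj x)).
  have hpre : forall x, p (pre x) = x.
    by move=> x; rewrite /pre; case: constructive_indefinite_description.
  exists (fun x => c' (pre x)); split.
    move=> h g; rewrite /grp_d1.
    rewrite (hwd (pre (gmul h g)) (gmul (pre h) (pre g))); last by rewrite hp !hpre.
    by rewrite hmul hpre opprD addrA subrr add0r addNr.
  by apply: functional_extensionality => g; rewrite /infl; apply: hwd; rewrite hpre.
split; first exact: B1B1.
split.
  move=> c' [m hm]; exists (fun x => m - act x m); split; first by exists m.
  by apply: functional_extensionality => g; rewrite /infl hm.
move=> c _; split; last exact: B1B1.
case=> m hm; exists m => x; have [g <-] := hsurj x; exact: hm.
Qed.
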